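(* For $k\geq 0$ and $0\leq i\leq k+1$, $$f_{k+1,i}(x)=\sum_{j=0}^{i}(1+x)^{k+1-i}f_{k,j}(x)-f_{k,i}(x),$$ with initial conditions $f_{0,0}(x)=1$ and $f_{k,i}(x)=0$ for $k<i$.
   Context: An inversion sequence of length $n$ is $e=e_1\ldots e_n$ with $0\le e_i<i$. $\mathrm{asc}(e_1\ldots e_i)=|\{\ell\in[i-1]:e_\ell<e_{\ell+1}\}|$. An ascent sequence is an inversion sequence with $e_{i+1}\le \mathrm{asc}(e_1\ldots e_i)+1$ for all $i$; it is primitive if $e_i\ne e_{i+1}$ for all $i$. Let $\mathcal{PA}$ be the set of primitive ascent sequences of all lengths $\geq1$. For primitive $e$, partition $e$ into maximal strictly decreasing consecutive blocks (runs); an entry is a tail if it is the last (smallest) entry of its run. Define $\mathrm{wt}(e)=\prod_{i=1}^{\mathrm{len}(e)}\mathrm{wt}(e_i)$ with $\mathrm{wt}(e_i)=1$ if $e_i$ is a tail and $\mathrm{wt}(e_i)=x$ otherwise. A sequence avoids $\underline{12}0$ if there are no indices $2\le i<j$ with $e_j<e_{i-1}<e_i$. Let $\mathcal{PA}_{k,i}(\underline{12}0)$ be the set of $\underline{12}0$-avoiding $e\in\mathcal{PA}$ with $\mathrm{asc}(e)=k$ and last entry equal to $i$, and $f_{k,i}(x)=\sum_{e\in\mathcal{PA}_{k,i}(\underline{12}0)}\mathrm{wt}(e)$. *)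

(* Defs.v *)
(* Sequences are seq nat, 0-indexed: e = e_1 ... e_n is
   represented by [:: e_1; ...; e_n], so nth 0 e j = e_{j+1}. *)
From HB Require Import structures.
From mathcomp Require Import all_boot all_order all_algebra.
Set Implicit Arguments. Unset Strict Implicit. Unset Printing Implicit Defensive.
Import GRing.Theory.
Local Open Scope ring_scope.

Definition is_inversion (e : seq nat) : bool :=
  all (fun j => (nth 0%N e j <= j)%N) (iota 0 (size e)).

Definition asc (e : seq nat) : nat :=
  count (fun p : nat * nat => (p.1 < p.2)%N) (zip e (behead e)).

Definition is_ascent (e : seq nat) : bool :=
  is_inversion e &&
  all (fun i => (nth 0%N e i <= (asc (take i e)).+1)%N) (iota 1 (size e).-1).

Definition is_primitive (e : seq nat) : bool :=
  all (fun j => nth 0%N e j != nth 0%N e j.+1) (iota 0 (size e).-1).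

(* the entry at (0-based) position j is a tail: last entry of its maximal
   strictly decreasing consecutive run *)
Definition is_tail (e : seq nat) (j : nat) : bool :=
  (j.+1 == size e) || ~~ (nth 0%N e j.+1 < nth 0%N e j)%N.

Definition wt (e : seq nat) : {poly int} :=
  \prod_(j < size e) (if is_tail e j then 1 else 'X).

Definition avoids120 (e : seq nat) : bool :=
  ~~ has (fun a => has (fun b =>
          (nth 0%N e b < nth 0%N e a.-1 < nth 0%N e a)%N)
        (iota a.+1 (size e - a.+1))) (iota 1 (size e).-1).

Definition inPA (k i : nat) (e : seq nat) : bool :=
  [&& (0 < size e)%N, is_ascent e, is_primitive e, avoids120 e,
      asc e == k & last 0%N e == i].

Definition seq_of_ffun n (g : {ffun 'I_n -> 'I_n}) : seq nat :=
  [seq (val (g j)) | j <- enum 'I_n].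

(* Sum of weights over the sequences of PA_{k,i}(12_0) of length n.
   Every inversion sequence of length n is seq_of_ffun g for exactly one g. *)
Definition f_len (k i n : nat) : {poly int} :=
  \sum_(g : {ffun 'I_n -> 'I_n} | inPA k i (seq_of_ffun g) && is_inversion (seq_of_ffun g))
     wt (seq_of_ffun g).

(* A primitive ascent sequence with asc = k has entries <= k+1 and consists
   of k+1 strictly decreasing runs, hence has length <= (k+1)(k+2) < (k+2)^2.
   So summing over lengths n < (k+2)^2 covers all of PA_{k,i}(12_0). *)
Definition f (k i : nat) : {poly int} :=
  \sum_(n < (k.+2 ^ 2)%N) f_len k i n.

(* Main.v *)
Require Import Defs.
From HB Require Import structures.
From mathcomp Require Import all_boot all_order all_algebra.
From mathcomp Require Import zify.
Import GRing.Theory.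

Definition gtr : rel nat := fun a b => (b < a)%N.
Lemma gtr_trans : transitive gtr.
Proof. move=> y x z; rewrite /gtr; lia. Qed.

Lemma asc_cons2 x y t : asc [:: x, y & t] = (x < y) + asc (y :: t).
Proof. by []. Qed.

Lemma asc1 x : asc [:: x] = 0. Proof. by []. Qed.

Lemma asc_rcons_cons x e v : asc (rcons (x :: e) v) = asc (x :: e) + (last x e < v).
Proof.
elim: e x => [|y t IH] x /=; first by rewrite asc_cons2 asc1 addn0.
by rewrite asc_cons2 IH asc_cons2 addnA.
Qed.

Lemma asc_rcons (e : seq nat) (v : nat) : e != [::] -> asc (rcons e v) = asc e + (last 0 e < v).
Proof. by case: e => [|x e] //= _; rewrite asc_rcons_cons. Qed.

Lemma asc_size_cons x e : asc (x :: e) <= size e.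
Proof.
elim: e x => [|y t IH] x //=.
rewrite asc_cons2 /=; have := IH y; case: (x < y) => /=; lia.
Qed.

Lemma iota_rcons m n : iota m n.+1 = rcons (iota m n) (m + n).
Proof. by rewrite -addn1 iotaD cats1. Qed.

Lemma is_inversion_rcons (e : seq nat) (v : nat) :
  is_inversion (rcons e v) = is_inversion e && (v <= size e).
Proof.
rewrite /is_inversion size_rcons iota_rcons all_rcons add0n nth_rcons ltnn eqxx andbC.
congr andb; apply: eq_in_all => j; rewrite mem_iota add0n /= => Hj.
by rewrite nth_rcons Hj.
Qed.

Lemma take_rcons_le (e : seq nat) v i : i <= size e -> take i (rcons e v) = take i e.
Proof. by move=> H; rewrite -cats1 takel_cat. Qed.

Lemma is_ascent_rcons (e : seq nat) (v : nat) : e != [::] ->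
  is_ascent (rcons e v) = is_ascent e && (v <= (asc e).+1).
Proof.
move=> ne.
have Ha : asc e < size e by case: e ne => [|x e] // _ /=; have := asc_size_cons x e; lia.
have He : (size e).-1.+1 = size e by case: (e) ne.
rewrite /is_ascent is_inversion_rcons size_rcons /= -{2}He iota_rcons all_rcons.
have -> : all (fun i => nth 0 (rcons e v) i <= (asc (take i (rcons e v))).+1)
              (iota 1 (size e).-1) =
          all (fun i => nth 0 e i <= (asc (take i e)).+1) (iota 1 (size e).-1).
  apply: eq_in_all => j; rewrite mem_iota add1n He => /andP[_ Hj].
  by rewrite nth_rcons Hj take_rcons_le // ltnW.
rewrite add1n He nth_rcons ltnn eqxx take_rcons_le // take_size.
case: (is_inversion e) (all _ _) => [] [] //=; rewrite ?andbF //.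
case Hv: (v <= (asc e).+1); rewrite ?andbF //= andbT.
exact: leq_trans Hv Ha.
Qed.

Lemma is_primitive_rcons (e : seq nat) (v : nat) : e != [::] ->
  is_primitive (rcons e v) = is_primitive e && (last 0 e != v).
Proof.
move=> ne.
have He : (size e).-1.+1 = size e by case: (e) ne.
rewrite /is_primitive size_rcons /= -{1}He iota_rcons all_rcons add0n andbC.
congr andb.
  apply: eq_in_all => j; rewrite mem_iota add0n => /andP[_ Hj].
  have H1 : j.+1 < size e by rewrite -He.
  by rewrite !nth_rcons H1 (ltnW H1).
by rewrite !nth_rcons He ltnn eqxx ifT ?nth_last //; lia.
Qed.

Lemma iota1_rcons n : 0 < n -> iota 1 n = rcons (iota 1 n.-1) n.
Proof. by case: n => // n _; rewrite iota_rcons add1n. Qed.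

Lemma size_gt0 (e : seq nat) : e != [::] -> 0 < size e.
Proof. by case: e. Qed.

Definition lowOK (e : seq nat) v :=
  ~~ has (fun a => (v < nth 0 e a.-1 < nth 0 e a)) (iota 1 (size e).-1).

Lemma avoids120_rcons (e : seq nat) (v : nat) : e != [::] ->
  avoids120 (rcons e v) = avoids120 e && lowOK e v.
Proof.
move=> ne.
have He : (size e).-1.+1 = size e by case: (e) ne.
rewrite /avoids120 /lowOK size_rcons /= (iota1_rcons _ (size_gt0 _ ne)) has_rcons.
rewrite subnn /= -negb_or; congr negb.
rewrite -has_predU; apply: eq_in_has => a; rewrite mem_iota add1n He => /andP[Ha1 Ha].
have -> : (size e).+1 - a.+1 = (size e - a.+1).+1 by lia.
rewrite iota_rcons has_rcons /=.
have -> : a.+1 + (size e - a.+1) = size e by lia.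
have Ha2 : a.-1 < size e by apply: leq_ltn_trans (leq_pred a) Ha.
rewrite nth_rcons ltnn eqxx !nth_rcons Ha Ha2.
rewrite orbC; congr orb.
apply: eq_in_has => b; rewrite mem_iota => /andP[_ Hb].
rewrite nth_rcons; have -> : b < size e by lia. by [].
Qed.

Lemma lowOK_rcons (e : seq nat) (u v : nat) : e != [::] ->
  lowOK (rcons e u) v = lowOK e v && ~~ (v < last 0 e < u).
Proof.
move=> ne.
have He : (size e).-1.+1 = size e by case: (e) ne.
rewrite /lowOK size_rcons /= (iota1_rcons _ (size_gt0 _ ne)) has_rcons negb_or andbC.
congr andb.
  congr negb; apply: eq_in_has => a; rewrite mem_iota add1n He => /andP[Ha1 Ha].
  by rewrite !nth_rcons Ha ifT //; lia.
by rewrite !nth_rcons ltnn eqxx ifT ?nth_last //; lia.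
Qed.

Lemma lowOK_mono (e : seq nat) (w v : nat) : lowOK e w -> w <= v -> lowOK e v.
Proof.
rewrite /lowOK => H Hwv; apply: contra H; apply: sub_has => a /= /andP[h1 h2].
by rewrite h2 andbT; apply: leq_ltn_trans Hwv h1.
Qed.

Lemma lowOK_nil v : lowOK [::] v. Proof. by []. Qed.
Lemma lowOK_1 x v : lowOK [:: x] v. Proof. by []. Qed.

Lemma avoids_last (e : seq nat) : e != [::] -> avoids120 e -> lowOK e (last 0 e).
Proof.
case/lastP: e => [|e u] // _.
case: (eqVneq e [::]) => [->|ne] //.
rewrite avoids120_rcons // lowOK_rcons // last_rcons => /andP[_ ->].
by apply/negP => /andP[h1 h2]; move: (ltn_trans h1 h2); rewrite ltnn.
Qed.

Definition valid (e : seq nat) :=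
  [&& 0 < size e, is_ascent e, is_primitive e & avoids120 e].

Lemma valid_rcons (e : seq nat) (v : nat) : e != [::] ->
  valid (rcons e v) = valid e && [&& v <= (asc e).+1, last 0 e != v & lowOK e v].
Proof.
move=> ne; rewrite /valid is_ascent_rcons // is_primitive_rcons // avoids120_rcons //.
rewrite size_rcons size_gt0 //.
by case: (is_ascent e); case: (is_primitive e); case: (avoids120 e);
  case: (v <= _); case: (_ != v); case: lowOK.
Qed.

Lemma valid_1 (v : nat) : valid [:: v] = (v == 0).
Proof.
by rewrite /valid /is_ascent /is_inversion /is_primitive /avoids120 /= leqn0 !andbT.
Qed.

Lemma valid_ne (e : seq nat) : valid e -> e != [::].
Proof. by case: e. Qed.

Lemma last_le_asc (e : seq nat) : valid e -> last 0 e <= (asc e).+1.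
Proof.
case/lastP: e => [|e u] //.
case: (eqVneq e [::]) => [->|ne]; first by rewrite valid_1 => /eqP ->.
rewrite valid_rcons // last_rcons asc_rcons // => /andP[_ /and3P[h _ _]].
by apply: leq_trans h _; rewrite ltnS leq_addr.
Qed.

Lemma desc_append (d q : seq nat) (w : nat) :
  valid q -> lowOK q w -> path gtr (last 0 q) d -> all (fun x => w <= x) d ->
  [&& valid (q ++ d), asc (q ++ d) == asc q & lowOK (q ++ d) w].
Proof.
elim: d q => [|u d IH] q vq lq; first by rewrite cats0 vq eqxx lq.
rewrite /= => /andP[hu hp] /andP[wu wd].
rewrite -cat_rcons.
have nq := valid_ne _ vq.
have hu' : u < last 0 q by [].
have vq' : valid (rcons q u).
  rewrite valid_rcons // vq /=.
  have -> : u <= (asc q).+1 := leq_trans (ltnW hu') (last_le_asc _ vq).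
  rewrite neq_ltn hu' orbT /=.
  exact: lowOK_mono lq wu.
have lq' : lowOK (rcons q u) w.
  by rewrite lowOK_rcons // lq /= [last 0 q < u]ltnNge (ltnW hu') andbF.
have := IH (rcons q u) vq' lq'; rewrite last_rcons => /(_ hp wd) /and3P[-> /eqP -> ->].
by rewrite asc_rcons // [last 0 q < u]ltnNge (ltnW hu') addn0 eqxx.
Qed.

Definition runcond (j m : nat) (r : seq nat) :=
  [&& r != [::], sorted gtr r, all (fun x => j <= x <= m) r & j < head 0 r].

Lemma valid_avoids (e : seq nat) : valid e -> avoids120 e.
Proof. by case/and4P. Qed.

Lemma run_append (p r : seq nat) :
  valid p -> runcond (last 0 p) (asc p).+1 r ->
  valid (p ++ r) && (asc (p ++ r) == (asc p).+1).
Proof.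
move=> vp; case: r => [|h d] //= /and4P[_ sd /andP[/andP[jh hm] ad] jlh].
rewrite /= in jlh.
have np := valid_ne _ vp.
rewrite -cat_rcons.
have vq : valid (rcons p h).
  rewrite valid_rcons // vp hm /= neq_ltn jlh /=.
  exact: lowOK_mono (avoids_last _ np (valid_avoids _ vp)) jh.
have lq : lowOK (rcons p h) (last 0 p).
  rewrite lowOK_rcons // (lowOK_mono _ _ _ (avoids_last _ np (valid_avoids _ vp)) (leqnn _)).
  by rewrite ltnn.
have ad' : all (fun x => last 0 p <= x) d.
  by apply: sub_all ad => x /andP[].
have := desc_append d (rcons p h) (last 0 p) vq lq; rewrite last_rcons => /(_ sd ad').
case/and3P=> -> /eqP -> _.
by rewrite asc_rcons // jlh addn1 eqxx.
Qed.

Lemma lowOK_cat_bd (p r : seq nat) v : p != [::] -> r != [::] ->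
  lowOK (p ++ r) v -> ~~ (v < last 0 p < head 0 r).
Proof.
move=> np nr; rewrite /lowOK; apply: contra => H; apply/hasP; exists (size p).
  rewrite mem_iota size_cat; case: p np {H} => // x p _; case: r nr => // y r _ /=; lia.
have Hp : (size p).-1 < size p by case: (p) np.
by rewrite !nth_cat Hp ltnn subnn nth_last nth0.
Qed.

Lemma decomp (e : seq nat) : valid e -> e = [:: 0] \/
  exists p r, [/\ valid p, e = p ++ r, asc e = (asc p).+1 & runcond (last 0 p) (asc p).+1 r].
Proof.
elim/last_ind: e => [|e v IH] //.
case: (eqVneq e [::]) => [->|ne]; first by rewrite /= valid_1 => /eqP ->; left.
rewrite valid_rcons // => /andP[ve /and3P[va vn vl]].
case: (ltngtP (last 0 e) v) => [hlt|hgt|heq]; last by rewrite heq eqxx in vn.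
  right; exists e, [:: v]; split => //; first by rewrite cats1.
    by rewrite asc_rcons // hlt addn1.
  by rewrite /runcond /= (ltnW hlt) va hlt.
case: (IH ve) => [E|[p [r [vp E ae rc]]]].
  by rewrite E /= in hgt.
right; exists p, (rcons r v); split => //.
  by rewrite E rcons_cat.
  rewrite asc_rcons // [last 0 e < v]ltnNge (ltnW hgt) addn0 ae //.
case/and4P: rc => nr sr ar hr.
have np := valid_ne _ vp.
have lr : last 0 e = last 0 r by rewrite E last_cat; case: (r) nr.
have Hj := lowOK_cat_bd p r v np nr; rewrite -E hr andbT -leqNgt in Hj.
have Hj' := Hj vl.
apply/and4P; split.
- by case: (r).
- case: r nr sr hr lr ar {E Hj} => // h t _ /= sr _ lr _.
  by rewrite rcons_path sr -lr.
- rewrite all_rcons ar Hj' /= andbT.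
  have : last 0 r \in r by case: (r) nr => // h t _; rewrite /= mem_last.
  move/(allP ar)=> /andP[_ hm]; rewrite -lr in hm.
  exact: leq_trans (ltnW hgt) hm.
- by case: (r) nr hr.
Qed.

Fixpoint D (lo n : nat) : seq (seq nat) :=
  if n is n'.+1 then D lo n' ++ [seq (lo + n') :: s | s <- D lo n'] else [:: [::]].

Lemma path_last_min (x : nat) (t : seq nat) :
  path gtr x t -> all (fun y => last x t <= y) (x :: t).
Proof.
elim: t x => [|y t IH] x /=; first by rewrite leqnn.
case/andP=> hyx hp; have := IH y hp => /= /andP[hl ->]; rewrite hl andbT.
by rewrite andbT; apply: leq_trans hl (ltnW hyx).
Qed.

Lemma sorted_rcons_gtr (s : seq nat) (i : nat) :
  sorted gtr (rcons s i) = sorted gtr s && all (fun y => i < y) s.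
Proof.
case: s => [|x t] //=.
rewrite rcons_path; case hp: (path gtr x t) => //=.
have H := path_last_min x t hp.
have Hal : all (fun y => i < y) (x :: t) = (i < last x t).
  apply/idP/idP; first by move=> /allP; apply; exact: mem_last.
  move=> hl; apply/allP => y yt; have := allP H y yt => hy.
  exact: leq_trans hl hy.
by rewrite /gtr -Hal.
Qed.

Lemma mem_D lo n (s : seq nat) :
  (s \in D lo n) = sorted gtr s && all (fun x => lo <= x < lo + n) s.
Proof.
elim: n s => [|n IH] s /=.
  rewrite inE; case: s => [|x s] //; apply/idP/idP => //.
  by case/andP => _ /= /andP[/andP[h1 h2] _]; rewrite addn0 in h2; lia.
have wid : forall t, all (fun x => lo <= x < lo + n) t -> all (fun x => lo <= x < lo + n.+1) t.
  by move=> t; apply: sub_all => x /andP[h1 h2]; apply/andP; split; lia.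
rewrite mem_cat IH; apply/idP/idP.
  case/orP=> [/andP[h1 h2]|/mapP[t ht ->]]; first by rewrite h1 wid.
  rewrite IH in ht; case/andP: ht => st at'.
  rewrite /= (path_sortedE gtr_trans) st andbT.
  apply/andP; split; last first.
    by rewrite wid // andbT; apply/andP; split; lia.
  by apply: sub_all at' => x /andP[h1 h2]; rewrite /gtr.
case: s => [|x t]; first by [].
rewrite /= (path_sortedE gtr_trans) -andbA => /and4P[ht st /andP[hx1 hx2] at'].
case: (ltngtP x (lo + n)) => [hlt|hgt|heq].
- apply/orP; left; rewrite ht st hx1 /=.
  apply/allP => y yt; have := allP ht y yt; rewrite /gtr => hy.
  have := allP at' y yt => /andP[-> _] /=; exact: ltn_trans hy hlt.
- exfalso; lia.
- apply/orP; right; apply/mapP; exists t; last by rewrite heq.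
  rewrite IH st /=; apply/allP => y yt; have := allP ht y yt; rewrite /gtr => hy.
  have := allP at' y yt => /andP[-> _] /=; by rewrite -heq.
Qed.

Lemma uniq_D lo n : uniq (D lo n).
Proof.
elim: n => [|n IH] //=.
rewrite cat_uniq IH map_inj_uniq ?IH; last by move=> x y [].
rewrite andbT /=; apply/hasPn => s /mapP[t _ ->].
by rewrite mem_D /= ltnn !andbF.
Qed.

Lemma size_D lo n (s : seq nat) : s \in D lo n -> size s <= n.
Proof.
elim: n s => [|n IH] s /=; first by rewrite inE => /eqP ->.
rewrite mem_cat => /orP[/IH h|/mapP[t /IH h ->]] //; exact: leqW.
Qed.

Definition runs (j m : nat) : seq (seq nat) :=
  [seq rcons s i | i <- iota j (m.+1 - j),
                   s <- [seq s <- D i.+1 (m - i) | (s != [::]) || (j < i)]].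

Lemma mem_runs j m (r : seq nat) : (r \in runs j m) = runcond j m r.
Proof.
apply/allpairsPdep/idP.
  case=> i [s [hi hs ->]].
  rewrite mem_iota in hi; rewrite mem_filter mem_D in hs.
  case/andP: hs => hne /andP[ss as'].
  apply/and4P; split.
  - by case: (s).
  - rewrite sorted_rcons_gtr ss; apply: sub_all as' => x /andP[]; done.
  - rewrite all_rcons; apply/andP; split; first by apply/andP; split; lia.
    by apply: sub_all as' => x /andP[h1 h2]; apply/andP; split; lia.
  - case: s hne as' {ss} => [|x t] /= hne; first by [].
    by move=> /andP[/andP[h1 _] _]; lia.
case/and4P=> nr sr ar hr.
case/lastP: r nr sr ar hr => [|s i] // _.
rewrite sorted_rcons_gtr all_rcons => /andP[ss si] /andP[/andP[ji im] as'] hr.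
exists i, s; split => //.
  by rewrite mem_iota; apply/andP; split; lia.
rewrite mem_filter mem_D ss /=; apply/andP; split.
  by case: s hr {ss si as'} => [|x t] //= hr; rewrite orbF.
apply/allP => y ys; have := allP si y ys; have := allP as' y ys => /andP[_ h2] h1.
by apply/andP; split; lia.
Qed.

Lemma uniq_runs j m : uniq (runs j m).
Proof.
apply: allpairs_uniq_dep.
- exact: iota_uniq.
- by move=> i _; apply: filter_uniq; apply: uniq_D.
- move=> [i1 s1] [i2 s2] _ _ /= /rcons_inj [-> ->]; done.
Qed.

Lemma no_lt (p r p' r' : seq nat) : p ++ r = p' ++ r' -> size p < size p' ->
  sorted gtr r -> r' != [::] -> last 0 p' < head 0 r' -> False.
Proof.
move=> E hs sr nr' hl.
have Er : r = drop (size p) p' ++ r'.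
  by rewrite -(drop_size_cat r (erefl (size p))) E drop_cat hs.
have Ep' : p' = take (size p) p' ++ drop (size p) p' by rewrite cat_take_drop.
move: (drop (size p) p') Er Ep' => t Er Ep'.
have nt : t != [::].
  apply/eqP => t0; rewrite t0 cats0 in Ep'.
  have := size_take_min (size p) p'; rewrite -Ep' => h; lia.
rewrite Ep' last_cat in hl.
case: t nt Er hl {Ep'} => // a t' _ Er hl.
rewrite Er /= cat_path in sr; case/andP: sr => _.
case: r' nr' hl {E Er} => // b r'' _ /= hl /andP[hb _].
rewrite /gtr in hb; move: (ltn_trans hl hb); by rewrite ltnn.
Qed.

Lemma cat_run_inj (p r p' r' : seq nat) m m' : p ++ r = p' ++ r' ->
  runcond (last 0 p) m r -> runcond (last 0 p') m' r' -> p = p' /\ r = r'.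
Proof.
move=> E rc rc'.
case/and4P: (rc) => nr sr _ hr; case/and4P: (rc') => nr' sr' _ hr'.
case: (ltngtP (size p) (size p')) => [h|h|h].
- by case: (no_lt _ _ _ _ E h sr nr' hr').
- by case: (no_lt _ _ _ _ (esym E) h sr' nr hr).
- by move/eqP: E; rewrite eqseq_cat // => /andP[/eqP -> /eqP ->].
Qed.

Fixpoint S (k : nat) : seq (seq nat) :=
  if k is k'.+1 then [seq p ++ r | p <- S k', r <- runs (last 0 p) k]
  else [:: [:: 0]].

Lemma mem_S k (s : seq nat) : (s \in S k) = valid s && (asc s == k).
Proof.
elim: k s => [|k IH] s.
  rewrite /= inE; apply/idP/idP; first by move/eqP ->.
  case/andP=> vs /eqP as0; case: (decomp s vs) => [->|[p [r [_ _ ae _]]]]; first by [].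
  by rewrite ae in as0.
apply/allpairsPdep/idP.
  case=> p [r [hp hr ->]]; rewrite IH in hp; case/andP: hp => vp /eqP ap.
  rewrite mem_runs -ap in hr.
  by have := run_append p r vp hr; rewrite ap.
case/andP=> vs /eqP as1.
case: (decomp s vs) => [E|[p [r [vp E ae rc]]]]; first by rewrite E in as1.
exists p, r; split => //.
  by rewrite IH vp /= -eqSS -ae as1.
by rewrite mem_runs; have -> : k.+1 = (asc p).+1 by rewrite -ae as1.
Qed.

Lemma uniq_S k : uniq (S k).
Proof.
elim: k => [|k IH] //=.
apply: allpairs_uniq_dep => //.
- by move=> p _; apply: uniq_runs.
- move=> [p1 r1] [p2 r2] /allpairsPdep[p1' [r1' [h1 h1' e1]]] /allpairsPdep[p2' [r2' [h2 h2' e2]]] /= E.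
  case: e1 => ? ?; case: e2 => ? ?; subst.
  rewrite mem_runs in h1'; rewrite mem_runs in h2'.
  by case: (cat_run_inj _ _ _ _ _ _ E h1' h2') => -> ->.
Qed.

Lemma size_runs j m (r : seq nat) : r \in runs j m -> size r <= m.+1.
Proof.
case/allpairsPdep=> i [s [hi hs ->]]; rewrite mem_filter in hs.
case/andP: hs => _ /size_D h; rewrite size_rcons ltnS; apply: leq_trans h _.
exact: leq_subr.
Qed.

Lemma size_S k (s : seq nat) : s \in S k -> size s <= k.+1 * k.+1.
Proof.
elim: k s => [|k IH] s; first by rewrite inE => /eqP ->.
case/allpairsPdep=> p [r [hp hr ->]].
have := IH p hp; have := size_runs _ _ _ hr; rewrite size_cat; nia.
Qed.

Lemma last_runs j m (r : seq nat) p : r \in runs j m -> last p r <= m.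
Proof.
rewrite mem_runs => /and4P[nr _ ar _].
case: r nr ar => // x t _ ar.
by have := allP ar _ (mem_last x t) => /andP[_ ->].
Qed.

Lemma last_S k (s : seq nat) : s \in S k -> last 0 s <= k.
Proof.
case: k => [|k]; first by rewrite inE => /eqP ->.
case/allpairsPdep=> p [r [hp hr ->]].
rewrite last_cat; exact: last_runs hr.
Qed.

Local Open Scope ring_scope.

Lemma wt_rcons (e : seq nat) (v : nat) : e != [::] ->
  wt (rcons e v) = wt e * (if (v < last 0 e)%N then 'X else 1).
Proof.
move=> ne; have [n Hn] : exists n, size e = n.+1 by case: (e) ne => // x t _; exists (size t).
rewrite /wt size_rcons Hn !big_ord_recr /=.
have Ht : forall j : 'I_n, is_tail (rcons e v) (widen_ord (leqnSn n.+1) (widen_ord (leqnSn n) j))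
                         = is_tail e (widen_ord (leqnSn n) j).
  move=> j; rewrite /is_tail size_rcons Hn /= !nth_rcons Hn.
  have hj := ltn_ord j.
  have -> : (j.+1 < n.+1)%N by [].
  have -> : (j < n.+1)%N by apply: ltnW; apply: leq_trans hj _.
  have -> : (j.+1 == n.+2) = false by apply/negbTE; rewrite neq_ltn ltnS ltnW.
  have -> : (j.+1 == n.+1) = false by apply/negbTE; rewrite neq_ltn ltnS hj.
  done.
rewrite (eq_bigr (fun j : 'I_n => if is_tail e (widen_ord (leqnSn n) j) then 1 else 'X)); last first.
  by move=> j _; rewrite Ht.
rewrite /is_tail size_rcons Hn /= eqxx /= !nth_rcons Hn ltnn eqxx ltnSn.
have -> : (n.+1 == n.+2) = false by apply/negbTE; rewrite neq_ltn ltnSn.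
have -> : nth 0 e n = last 0 e by rewrite -nth_last Hn.
by case: (v < last 0 e)%N; rewrite /= !mulr1.
Qed.

Lemma wt_desc (d p : seq nat) : p != [::] -> path gtr (last 0 p) d ->
  wt (p ++ d) = wt p * 'X^(size d).
Proof.
elim: d p => [|u d IH] p np /=; first by rewrite cats0 expr0 mulr1.
case/andP=> hu hp; rewrite -cat_rcons IH ?last_rcons //; last by case: (p).
by rewrite wt_rcons //; rewrite /gtr in hu; rewrite hu exprS mulrA.
Qed.

Lemma wt_run (p r : seq nat) m : p != [::] -> runcond (last 0 p) m r ->
  wt (p ++ r) = wt p * 'X ^+ (size r).-1.
Proof.
move=> np; case: r => [|h d] //= /and4P[_ sd _ hr]; rewrite /= in hr.
rewrite -cat_rcons wt_desc ?last_rcons //; last by case: (p).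
by rewrite wt_rcons // ltnNge (ltnW hr) /= mulr1.
Qed.

Lemma sum_D_all lo n : \sum_(s <- D lo n) 'X^(size s) = (1 + 'X : {poly int}) ^+ n.
Proof.
elim: n => [|n IH] /=; first by rewrite big_seq1 expr0.
rewrite big_cat big_map /= IH.
under eq_bigr do rewrite exprS.
by rewrite -big_distrr /= IH exprS mulrDl mul1r addrC.
Qed.

Lemma sum_D_ne lo n :
  \sum_(s <- D lo n | s != [::]) 'X^(size s) = (1 + 'X : {poly int}) ^+ n - 1.
Proof.
elim: n => [|n IH] /=; first by rewrite big_cons big_nil /= expr0 subrr.
rewrite big_cat big_map /= IH.
rewrite big_mkcond /=.
under eq_bigr do rewrite exprS.
rewrite -big_distrr /= sum_D_all exprS mulrDl mul1r.
by rewrite addrAC.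
Qed.

Lemma sum_iota_eq (a n i : nat) (H : nat -> {poly int}) :
  \sum_(i' <- iota a n) (if i' == i then H i' else 0) =
  if (a <= i < a + n)%N then H i else 0.
Proof.
elim: n a => [|n IH] a /=; first by rewrite big_nil addn0; case: leqP => //= h; rewrite ltnNge h.
rewrite big_cons IH.
case: (eqVneq a i) => [->|ne].
  by rewrite leqnn addnS ltnS leq_addr /= ltnNge leqnn /= addr0.
rewrite add0r addSnnS ltn_neqAle ne /=.
by [].
Qed.

Definition G (j m i : nat) : {poly int} :=
  if (j <= i < j + (m.+1 - j))%N then
    (if (j < i)%N then (1 + 'X) ^+ (m - i) else (1 + 'X) ^+ (m - i) - 1)
  else 0.

Lemma sum_runs (p : seq nat) (m i : nat) : p != [::] ->
  \sum_(r <- runs (last 0 p) m | last 0 (p ++ r) == i) wt (p ++ r)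
  = wt p * G (last 0 p) m i.
Proof.
move=> np.
rewrite big_mkcond /runs big_allpairs_dep /=.
transitivity (\sum_(i' <- iota (last 0 p) (m.+1 - last 0 p))
   (if i' == i then wt p * \sum_(s <- [seq s <- D i'.+1 (m - i') | (s != [::]) || (last 0 p < i')%N])
       'X ^+ (size s) else 0)).
  apply: eq_big_seq => i' hi'.
  case: (eqVneq i' i) => [E|ne].
  - rewrite big_distrr /=; apply: eq_big_seq => s hs.
    rewrite last_cat last_rcons E eqxx.
    rewrite (wt_run p _ m np); first by rewrite size_rcons.
    by rewrite -mem_runs; apply/allpairsPdep; exists i', s; split => //; rewrite E.
  - rewrite big1_seq // => s _; rewrite last_cat last_rcons; case: eqP => // h.
    by rewrite h eqxx in ne.
rewrite (sum_iota_eq (last 0 p) (m.+1 - last 0 p) i (fun i' => wt p *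
   \sum_(s <- [seq s <- D i'.+1 (m - i') | (s != [::]) || (last 0 p < i')%N]) 'X ^+ (size s))).
rewrite /G; case: ifP => _; last by rewrite mulr0.
rewrite big_filter; case: (last 0 p < i)%N.
  by under eq_bigl do rewrite orbT; rewrite sum_D_all.
by under eq_bigl do rewrite orbF; rewrite sum_D_ne.
Qed.

Definition F (k i : nat) : {poly int} := \sum_(s <- S k | last 0 s == i) wt s.

Lemma FE k i : F k i = \sum_(p <- S k) ((last 0 p == i)%:R * wt p).
Proof.
rewrite /F big_mkcond; apply: eq_bigr => p _.
by case: (last 0 p == i); rewrite ?mul1r ?mul0r.
Qed.

Lemma sum_ord_eq (x n : nat) : \sum_(j < n) ((x == j)%:R : {poly int}) = (x < n)%:R.
Proof.
elim: n => [|n IH]; first by rewrite big_ord0.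
rewrite big_ord_recr /= IH.
case: (ltngtP x n) => [h|h|->].
- by rewrite ltnS (ltnW h) addr0.
- by rewrite ltnS leqNgt h addr0.
- by rewrite ltnSn add0r.
Qed.

Lemma G_eq j k i : (j <= k)%N -> (i <= k.+1)%N ->
  G j k.+1 i = (j <= i)%:R * (1 + 'X) ^+ (k.+1 - i) - (j == i)%:R.
Proof.
move=> hj hi; rewrite /G.
have -> : (j + (k.+2 - j) = k.+2)%N by lia.
rewrite ltnS hi andbT.
case: (ltngtP j i) => [h|h|e].
- by rewrite mul1r subr0.
- by rewrite mul0r subr0.
- by rewrite mul1r.
Qed.

Lemma F_rec k i : (i <= k.+1)%N ->
  F k.+1 i = \sum_(j < i.+1) (1 + 'X) ^+ (k.+1 - i) * F k j - F k i.
Proof.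
move=> hi.
rewrite {1}/F /= big_mkcond big_allpairs_dep /=.
set A := (1 + 'X : {poly int}) ^+ (k.+1 - i).
transitivity (\sum_(p <- S k) (wt p * ((last 0 p <= i)%:R * A - (last 0 p == i)%:R))).
  apply: eq_big_seq => p hp.
  rewrite -big_mkcond sum_runs; last by apply: valid_ne; move: hp; rewrite mem_S => /andP[].
  by rewrite G_eq // last_S.
under eq_bigr do rewrite FE big_distrr /=.
rewrite exchange_big /= FE -sumrB; apply: eq_bigr => p _.
rewrite mulrBr; congr (_ - _); last by rewrite mulrC.
under eq_bigr do rewrite mulrA [A * _]mulrC -mulrA.
by rewrite -big_distrl /= sum_ord_eq ltnS mulrC mulrA.
Qed.

Definition L n : seq (seq nat) := map (@seq_of_ffun n) (index_enum {ffun 'I_n -> 'I_n}).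

Lemma f_lenE k i n :
  f_len k i n = \sum_(s <- L n | inPA k i s && is_inversion s) wt s.
Proof. by rewrite /f_len /L big_map. Qed.

Lemma mem_L n (s : seq nat) : (s \in L n) = (size s == n) && all (fun x => (x < n)%N) s.
Proof.
apply/mapP/idP.
  case=> g _ ->; rewrite /seq_of_ffun size_map size_enum_ord eqxx /=.
  by apply/allP => x /mapP[j _ ->].
case/andP=> /eqP hs ha.
have H : forall j : 'I_n, (nth 0 s j %% n < n)%N.
  by move=> j; apply: ltn_pmod; apply: leq_ltn_trans (leq0n j) (ltn_ord j).
exists [ffun j : 'I_n => Ordinal (H j)]; first by rewrite mem_index_enum.
rewrite /seq_of_ffun.
have -> : [seq val ([ffun j => Ordinal (H j)] j) | j <- enum 'I_n]
         = [seq (nth 0 s j %% n)%N | j <- [seq val j | j <- enum 'I_n]].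
  by rewrite -map_comp; apply: eq_map => j /=; rewrite ffunE.
rewrite val_enum_ord -{1}(mkseq_nth 0 s) hs /mkseq; apply/eq_in_map => j.
rewrite mem_iota add0n => /andP[_ hj]; rewrite modn_small //.
by apply: (allP ha); apply: mem_nth; rewrite hs.
Qed.

Lemma uniq_L n : uniq (L n).
Proof.
rewrite /L map_inj_uniq ?index_enum_uniq // => g1 g2 /eqP.
rewrite /seq_of_ffun => /eqP /eq_in_map H; apply/ffunP => j.
by apply: val_inj; apply: H; rewrite mem_enum.
Qed.

Lemma size_L n (s : seq nat) : s \in L n -> size s = n.
Proof. by rewrite mem_L => /andP[/eqP]. Qed.

Lemma inPA_valid k i (e : seq nat) : inPA k i e = [&& valid e, asc e == k & last 0 e == i].
Proof. by rewrite /inPA /valid -!andbA. Qed.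

Lemma inv_all (s : seq nat) : is_inversion s -> all (fun x => (x < size s)%N) s.
Proof.
move=> H; apply/(all_nthP 0) => j hj.
have := allP H j; rewrite mem_iota add0n hj => /(_ isT) h.
exact: leq_ltn_trans h hj.
Qed.

Lemma valid_inv (s : seq nat) : valid s -> is_inversion s.
Proof. by case/and4P=> _ /andP[]. Qed.

Lemma f_eq_F k i : f k i = F k i.
Proof.
rewrite /f.
under eq_bigr do rewrite f_lenE big_mkcond.
rewrite -(big_mkord xpredT (fun n => \sum_(s <- L n) (if inPA k i s && is_inversion s then wt s else 0))).
rewrite /index_iota subn0 -(big_allpairs_dep (h := fun (_ : nat) (s : seq nat) => s) (r1 := iota 0 (k.+2 ^ 2)) (r2 := L) (F := fun s => if inPA k i s && is_inversion s then wt s else 0)) .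
rewrite -big_mkcond -big_filter /F -[RHS]big_filter.
apply: perm_big; apply: uniq_perm.
- apply: filter_uniq; apply: allpairs_uniq_dep.
  + exact: iota_uniq.
  + by move=> n _; apply: uniq_L.
  + move=> [n1 s1] [n2 s2] /allpairsPdep[n1' [s1' [_ h1 e1]]] /allpairsPdep[n2' [s2' [_ h2 e2]]] /= E.
    case: e1 => ? ?; case: e2 => ? ?; subst.
    by rewrite -(size_L _ _ h1) -(size_L _ _ h2).
- by apply: filter_uniq; apply: uniq_S.
move=> s; rewrite !mem_filter inPA_valid mem_S.
apply/idP/idP.
  by move=> /andP[/andP[H _] _]; case/and3P: H => -> -> ->.
case/and3P=> /eqP hl vs ak.
rewrite vs ak hl eqxx (valid_inv _ vs) andTb !andbT.
apply/allpairsPdep; exists (size s), s; split => //.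
  rewrite mem_iota add0n /=.
  have := size_S k s; rewrite mem_S vs ak => /(_ isT) h.
  apply: leq_ltn_trans h _; rewrite -mulnn; apply: ltn_mul; exact: ltnSn.
by rewrite mem_L eqxx inv_all // valid_inv.
Qed.

Theorem lemma2p2 :
  (forall k i : nat, (i <= k.+1)%N ->
     f k.+1 i = \sum_(j < i.+1) (1 + 'X) ^+ (k.+1 - i) * f k j - f k i)
  /\ f 0 0 = 1
  /\ (forall k i : nat, (k < i)%N -> f k i = 0).
Proof.
split; [|split].
- move=> k i hi; rewrite !f_eq_F; under eq_bigr do rewrite f_eq_F.
  exact: F_rec.
- rewrite f_eq_F /F /= big_cons big_nil /= addr0 /wt big_ord1 /is_tail /=.
  by [].
- move=> k i hki; rewrite f_eq_F /F big_seq_cond big1 // => s /andP[hs /eqP hl].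
  have := last_S k s hs; rewrite hl => h.
  by move: (leq_ltn_trans h hki); rewrite ltnn.
Qed.
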